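(* Let $0<\epsilon<1$ and let $\bar b,\bar w$ satisfy $b/2\le\bar b\le 2b$ and $w/6\le\bar w\le 6w$. Let $(P_H,P_L)$ be any appropriate partition of $E$ with respect to $\bar b,\bar w,\epsilon$. Let $c>0$ and $s\ge c\cdot m\log(n/\epsilon^2)/(\bar b^{1/4}\epsilon^{9/4})$, let $e_1,\dots,e_s$ be edges drawn independently and uniformly at random from $E$, $S=\{e_1,\dots,e_s\}$, and $Y=\frac1s\sum_{i=1}^s\mathrm{wt}_{P_L}(e_i)$. Then $$b(1-c_H\epsilon)\le m\,\mathbb{E}[Y]\le b.$$ Moreover, if the constant $c$ is large enough (namely $c>1/(2(1-c_H\epsilon))$), then $$\Pr\left[mY<b(1-2c_H\epsilon)\right]<\frac{\epsilon^2}{n}.$$ Here $c_H=1.77\times10^4$.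
   Context: Let $G=(V,E)$ be a bipartite graph with bipartition $V=U\cup L$, $n=|V|$, $m=|E|$; $d_v$ is the degree of $v$; for $e=(u,v)$, $d_e=d_u+d_v-2$; $w$ is the number of wedges (paths with two edges). A butterfly is a set of four distinct vertices $\{u_1,u_2,v_1,v_2\}$, $u_i\in U$, $v_i\in L$, with all four pairs $u_iv_j$ edges; $b$ is the number of butterflies and $b(e)$ the number containing edge $e$. For nonempty $P_L\subseteq E$ and a butterfly $B$: $\mathrm{wt}_{P_L}(B)=0$ if none of its edges is in $P_L$, and $1/\ell$ if exactly $\ell>0$ of its edges are in $P_L$; for an edge $e$, $\mathrm{wt}_{P_L}(e)=0$ if $e\notin P_L$ and $\mathrm{wt}_{P_L}(e)=\sum_{B\ni e}\mathrm{wt}_{P_L}(B)$ otherwise. Given $\bar b,\bar w,\epsilon$, an edge $e$ is heavy if $b(e)>2\bar b^{3/4}/\epsilon^{1/4}$ or $d_e>\bar w/(\epsilon\bar b)^{1/4}$, and light if $b(e)<\bar b^{3/4}/(2\epsilon^{1/4})$ and $d_e<\bar w/(\epsilon\bar b)^{1/4}$. A partition $(P_H,P_L)$ of $E$ is appropriate if every heavy edge is in $P_H$ and every light edge in $P_L$. *)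

(* Defs.v *)
From HB Require Import structures.
From mathcomp Require Import all_boot all_order all_algebra.
From mathcomp Require Import reals exp.
Set Implicit Arguments. Unset Strict Implicit. Unset Printing Implicit Defensive.
Import Order.TTheory GRing.Theory Num.Theory.
Local Open Scope ring_scope.

Section Bipartite.
Variables (U L : finType) (E : {set U * L}).

Definition nverts : nat := (#|U| + #|L|)%N.
Definition nedges : nat := #|E|.

Definition nbrU (u : U) : {set L} := [set v | (u, v) \in E].
Definition nbrL (v : L) : {set U} := [set u | (u, v) \in E].
Definition degU (u : U) : nat := #|nbrU u|.
Definition degL (v : L) : nat := #|nbrL v|.

Definition edeg (e : U * L) : nat := (degU e.1 + degL e.2 - 2)%N.

(* wedges = paths with two edges: a middle vertex together with an unordered
   pair of distinct neighbours *)
Definition wedges : nat :=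
  (#|[set x : U * {set L} | (#|x.2| == 2) && (x.2 \subset nbrU x.1)]|
   + #|[set x : L * {set U} | (#|x.2| == 2) && (x.2 \subset nbrL x.1)]|)%N.

Definition butterflies : {set {set U} * {set L}} :=
  [set B : {set U} * {set L} | [&& #|B.1| == 2, #|B.2| == 2 & setX B.1 B.2 \subset E]].
Definition bedges (B : {set U} * {set L}) : {set U * L} := setX B.1 B.2.
Definition nbutterflies : nat := #|butterflies|.
Definition bfly_edge (e : U * L) : nat :=
  #|[set B in butterflies | e \in bedges B]|.

Variable R : realType.

Definition wtB (PL : {set U * L}) (B : {set U} * {set L}) : R :=
  let l := #|bedges B :&: PL| in if l == 0%N then 0 else (l%:R)^-1.

Definition wtE (PL : {set U * L}) (e : U * L) : R :=
  if e \in PL then \sum_(B in butterflies | e \in bedges B) wtB PL B else 0.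

Definition heavy (bb wb eps : R) (e : U * L) : bool :=
  ((bfly_edge e)%:R > 2 * bb `^ (3 / 4) / eps `^ (1 / 4))
  || ((edeg e)%:R > wb / (eps * bb) `^ (1 / 4)).

Definition light (bb wb eps : R) (e : U * L) : bool :=
  ((bfly_edge e)%:R < bb `^ (3 / 4) / (2 * eps `^ (1 / 4)))
  && ((edeg e)%:R < wb / (eps * bb) `^ (1 / 4)).

Definition appropriate (bb wb eps : R) (PH PL : {set U * L}) : Prop :=
  [/\ PH :|: PL = E, PH :&: PL = set0,
      (forall e, e \in E -> heavy bb wb eps e -> e \in PH) &
      (forall e, e \in E -> light bb wb eps e -> e \in PL)].

(* sample space: s independent uniform draws from E, i.e. the uniform
   distribution on E^s *)
Definition samples (s : nat) : {set {ffun 'I_s -> U * L}} :=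
  [set t : {ffun 'I_s -> U * L} | [forall i, t i \in E]].

Definition Yvar (PL : {set U * L}) (s : nat) (t : {ffun 'I_s -> U * L}) : R :=
  (s%:R)^-1 * \sum_(i < s) wtE PL (t i).

Definition expect (s : nat) (X : {ffun 'I_s -> U * L} -> R) : R :=
  (#|samples s|%:R)^-1 * \sum_(t in samples s) X t.

Definition prob (s : nat) (P : pred {ffun 'I_s -> U * L}) : R :=
  #|[set t in samples s | P t]|%:R / #|samples s|%:R.

End Bipartite.

Definition c_H {R : realType} : R := 17700%:R.

Arguments wtB {U L R} PL B.
Arguments wtE {U L} E {R} PL e.
Arguments heavy {U L} E {R} bb wb eps e.
Arguments light {U L} E {R} bb wb eps e.
Arguments appropriate {U L} E {R} bb wb eps PH PL.
Arguments Yvar {U L} E {R} PL s t.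
Arguments expect {U L} E {R} {s} X.
Arguments prob {U L} E {R} {s} P.

(* Main.v *)
Require Import Defs.
From HB Require Import structures.
From mathcomp Require Import all_boot all_order all_algebra.
From mathcomp Require Import reals exp.
From mathcomp Require sequences.
From mathcomp Require Import zify ring lra.
Import Order.TTheory GRing.Theory Num.Theory.
Local Open Scope ring_scope.
Notation expR := sequences.expR.
Set Implicit Arguments. Unset Strict Implicit. Unset Printing Implicit Defensive.

Section Comb.
Variables (U L : finType) (E : {set U * L}).

Lemma card_offdiag (T : finType) (A : {set T}) :
  #|[set p : T * T | [&& p.1 \in A, p.2 \in A & p.1 != p.2]]| = (#|A| * (#|A|).-1)%N.
Proof.
have -> : [set p : T * T | [&& p.1 \in A, p.2 \in A & p.1 != p.2]] =
          setX A A :\: [set (x, x) | x in A].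
  apply/setP => [[x y]]; rewrite !inE /=.
  apply/idP/idP.
    move=> /and3P [xA yA nxy]; rewrite xA yA !andbT.
    case: imsetP => // -[z _ [e1 e2]]; move: nxy; by rewrite e1 e2 eqxx.
  move=> /and3P [nim xA yA]; rewrite xA yA /=.
  apply: contraNneq nim => exy; apply/imsetP; exists x => //.
  by rewrite exy.
rewrite cardsD cardsX (setIidPr _); last first.
  by apply/subsetP => p /imsetP [x xA ->]; rewrite inE /= xA.
by rewrite card_imset; [rewrite -subn1 mulnBr muln1 | move=> x y []].
Qed.

Lemma set2_eq (T : finType) (A : {set T}) a c :
  #|A| = 2%N -> a \in A -> c \in A -> a != c -> [set a; c] = A.
Proof.
move=> cA aA cA' ac; apply/eqP; rewrite eqEcard cards2 ac cA leqnn andbT.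
by apply/subsetP => x; rewrite !inE => /orP [] /eqP ->.
Qed.

Lemma bedges_card B : B \in butterflies E -> #|bedges B| = 4%N.
Proof. by rewrite inE => /and3P [/eqP h1 /eqP h2 _]; rewrite /bedges cardsX h1 h2. Qed.

Lemma bedges_sub B : B \in butterflies E -> bedges B \subset E.
Proof. by rewrite inE => /and3P [_ _ h]. Qed.

Lemma bfly_count (NL : {set U * L}) :
  (4 * #|[set B in butterflies E | bedges B \subset NL]| <= #|NL| * (#|NL|).-1)%N.
Proof.
set S := [set B in butterflies E | bedges B \subset NL].
set Q := [set p : (U * L) * (U * L) | [&& p.1 \in NL, p.2 \in NL & p.1 != p.2]].
pose phi (p : (U * L) * (U * L)) := ([set p.1.1; p.2.1], [set p.1.2; p.2.2]).
rewrite -card_offdiag -/Q.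
have key : forall B, B \in S -> (4 <= #|[set p in Q | phi p == B]|)%N.
  move=> B; rewrite inE => /andP [Bb BN].
  move: (Bb); rewrite inE => /and3P [/eqP c1 /eqP c2 _].
  set D1 := [set p : U * U | [&& p.1 \in B.1, p.2 \in B.1 & p.1 != p.2]].
  set D2 := [set p : L * L | [&& p.1 \in B.2, p.2 \in B.2 & p.1 != p.2]].
  pose g (x : (U * U) * (L * L)) := ((x.1.1, x.2.1), (x.1.2, x.2.2)).
  have ginj : injective g.
    by move=> [[a b] [c d]] [[a' b'] [c' d']] [-> -> -> ->].
  have <- : #|g @: setX D1 D2| = 4%N.
    by rewrite card_imset // cardsX !card_offdiag c1 c2.
  apply: subset_leq_card; apply/subsetP => p /imsetP [[[a c] [b d]]].
  rewrite !inE /= => /andP [/and3P [aB cB ac] /and3P [bB dB bd]] -> {p}.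
  rewrite /g /phi /=.
  have e1 : (a, b) \in NL by apply: (subsetP BN); rewrite inE aB bB.
  have e2 : (c, d) \in NL by apply: (subsetP BN); rewrite inE cB dB.
  rewrite e1 e2 /=; apply/andP; split.
    by apply: contra_neq ac => -[].
  by rewrite (set2_eq c1 aB cB ac) (set2_eq c2 bB dB bd); case: (B).
have step : (\sum_(B in S) #|[set p in Q | phi p == B]| <= #|Q|)%N.
  have -> : (\sum_(B in S) #|[set p in Q | phi p == B]|)%N =
            #|[set p in Q | phi p \in S]|.
    rewrite -sum1_card (partition_big phi (mem S)) /=; last first.
      by move=> p; rewrite inE => /andP [].
    apply: eq_bigr => B BS; rewrite -sum1_card; apply: eq_bigl => p.
    rewrite [in RHS]inE [in LHS]inE.
    by case: eqP => [-> |]; rewrite ?BS ?andbT ?andbF.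
  by apply: subset_leq_card; apply/subsetP => p; rewrite inE => /andP [].
apply: leq_trans step.
rewrite -sum1_card big_distrr /=; apply: leq_sum => B BS; rewrite muln1.
exact: key.
Qed.

Lemma bfly_NL4 (NL : {set U * L}) B :
  B \in butterflies E -> bedges B \subset NL -> (4 <= #|NL|)%N.
Proof. by move=> Bb BN; rewrite -(bedges_card Bb); apply: subset_leq_card. Qed.

Lemma card_setsum (T : finType) (A : {set T}) (P : pred T) :
  #|[set x in A | P x]| = (\sum_(x in A) P x)%N.
Proof.
rewrite -sum1_card big_mkcond [RHS]big_mkcond; apply: eq_bigr => x _.
by rewrite inE; case: (x \in A); case: (P x).
Qed.

Lemma sum_bfly : (\sum_(e in E) bfly_edge E e <= 4 * nbutterflies E)%N.
Proof.
have -> : (\sum_(e in E) bfly_edge E e =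
   \sum_(e in E) \sum_(B in butterflies E) (e \in bedges B))%N.
  by apply: eq_bigr => e _; rewrite /bfly_edge card_setsum.
rewrite exchange_big /= /nbutterflies -sum1_card big_distrr /=.
apply: leq_sum => B Bb; rewrite muln1 -(bedges_card Bb).
rewrite -card_setsum; apply: subset_leq_card; apply/subsetP => e.
by rewrite inE => /andP [].
Qed.

Lemma card_2sub (X Y : finType) (nbr : X -> {set Y}) :
  #|[set x : X * {set Y} | (#|x.2| == 2) && (x.2 \subset nbr x.1)]| =
  (\sum_x 'C(#|nbr x|, 2))%N.
Proof.
set W := [set x : X * {set Y} | _].
transitivity (\sum_x \sum_(S : {set Y}) (if (x, S) \in W then 1 else 0))%N.
  by rewrite pair_bigA -sum1_card big_mkcond /=; apply: eq_bigr => -[x S].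
apply: eq_bigr => x _; rewrite -cards_draws -sum1_card [RHS]big_mkcond /=.
by apply: eq_bigr => S _; rewrite !inE andbC.
Qed.

Lemma bin2_mul2 d : (2 * 'C(d, 2) = d * d.-1)%N.
Proof.
rewrite mulnC (_ : 2%N = 2`!) // bin_ffact ffactnSr ffactn1.
by rewrite subn1.
Qed.

Lemma sumE_split (F : U * L -> nat) :
  (\sum_(e in E) F e = \sum_u \sum_v (if (u, v) \in E then F (u, v) else 0))%N.
Proof. by rewrite big_mkcond pair_bigA; apply: eq_bigr => -[u v]. Qed.

Lemma degU_sum u : degU E u = (\sum_v ((u, v) \in E))%N.
Proof. by rewrite /degU -sum1_card big_mkcond /=; apply: eq_bigr => v _; rewrite inE; case: ((u,v) \in E). Qed.

Lemma degL_sum v : degL E v = (\sum_u ((u, v) \in E))%N.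
Proof. by rewrite /degL -sum1_card big_mkcond /=; apply: eq_bigr => u _; rewrite inE; case: ((u,v) \in E). Qed.

Lemma sum_edeg : (\sum_(e in E) edeg E e = 2 * wedges E)%N.
Proof.
have h1 : forall e, e \in E -> edeg E e = ((degU E e.1).-1 + (degL E e.2).-1)%N.
  move=> [u v] /= uvE; rewrite /edeg /=.
  have : (0 < degU E u)%N by apply/card_gt0P; exists v; rewrite inE.
  have : (0 < degL E v)%N by apply/card_gt0P; exists u; rewrite inE.
  lia.
rewrite (eq_bigr _ h1) big_split /= !sumE_split /wedges !card_2sub mulnDr.
rewrite !big_distrr /=; congr (_ + _)%N.
  apply: eq_bigr => u _; rewrite bin2_mul2 -/(degU E u).
  set d := (degU E u).-1; rewrite degU_sum big_distrl /=.
  by apply: eq_bigr => v _; case: ((u, v) \in E); rewrite ?mul1n ?mul0n.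
rewrite exchange_big /=; apply: eq_bigr => v _; rewrite bin2_mul2 -/(degL E v).
set d := (degL E v).-1; rewrite degL_sum big_distrl /=.
by apply: eq_bigr => u _; case: ((u, v) \in E); rewrite ?mul1n ?mul0n.
Qed.

Lemma wedges_pos : (0 < nbutterflies E)%N -> (0 < wedges E)%N.
Proof.
move=> /card_gt0P [B]; rewrite inE => /and3P [c1 c2 sE].
have /card_gt0P [u uB] : (0 < #|B.1|)%N by rewrite (eqP c1).
rewrite /wedges addn_gt0; apply/orP; left; apply/card_gt0P; exists (u, B.2).
rewrite inE /= c2 /=; apply/subsetP => v vB; rewrite inE.
by apply: (subsetP sE); rewrite inE uB vB.
Qed.

End Comb.

Section Real.
Variables (R : realType) (U L : finType) (E : {set U * L}).

Lemma wtB_ge0 (PL : {set U * L}) (B : {set U} * {set L}) : 0 <= wtB PL B :> R.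
Proof. by rewrite /wtB; case: ifP => // _; rewrite invr_ge0 ler0n. Qed.

Lemma wtB_le1 (PL : {set U * L}) (B : {set U} * {set L}) : wtB PL B <= 1 :> R.
Proof.
rewrite /wtB; case: ifPn => // l0.
by rewrite invf_le1 ?ltr0n ?lt0n // ler1n lt0n.
Qed.

Lemma wtE_ge0 (PL : {set U * L}) e : 0 <= wtE E PL e :> R.
Proof. by rewrite /wtE; case: ifP => // _; apply: sumr_ge0 => B _; apply: wtB_ge0. Qed.

Lemma wtE_le_bfly (PL : {set U * L}) e : wtE E PL e <= (bfly_edge E e)%:R :> R.
Proof.
rewrite /wtE; case: ifP => _; last by rewrite ler0n.
rewrite /bfly_edge -sum1_card natr_sum.
rewrite (eq_bigl (fun B => (B \in butterflies E) && (e \in bedges B))); last first.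
  by move=> B; rewrite inE.
by apply: ler_sum => B _; apply: wtB_le1.
Qed.

Lemma sum_wtE (PL : {set U * L}) : PL \subset E ->
  \sum_(e in E) wtE E PL e =
  (#|[set B in butterflies E | bedges B :&: PL != set0]|)%:R :> R.
Proof.
move=> PLE.
rewrite (big_setID PL) /= (setIidPr PLE).
rewrite [X in _ + X]big1 ?addr0; last first.
  by move=> e; rewrite inE => /andP [/negbTE eP _]; rewrite /wtE eP.
rewrite (eq_bigr (fun e => \sum_(B in butterflies E | e \in bedges B) wtB PL B)); last first.
  by move=> e eP; rewrite /wtE eP.
rewrite (exchange_big_dep (mem (butterflies E))) /=; last by move=> e B _ /andP [].
rewrite -sum1_card natr_sum.
rewrite [RHS](eq_bigl (fun B => (B \in butterflies E) && (bedges B :&: PL != set0))); last first.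
  by move=> B; rewrite inE.
rewrite [RHS]big_mkcondr /=; apply: eq_bigr => B Bb.
rewrite (eq_bigl (fun e => e \in bedges B :&: PL)); last first.
  by move=> e; rewrite !inE; move: Bb; rewrite inE => -> /=; rewrite andbC.
rewrite sumr_const /wtB -cards_eq0.
case: eqP => [-> | /eqP l0]; first by rewrite mulr0n.
by rewrite /= -(mulr_natr (#|bedges B :&: PL|%:R^-1)) mulVf // pnatr_eq0.
Qed.

Lemma sum_prod (s : nat) (g : 'I_s -> U * L -> R) :
  \sum_(t in samples E s) \prod_i g i (t i) = \prod_i \sum_(e in E) g i e.
Proof.
rewrite bigA_distr_big; apply: eq_bigl => t; rewrite inE.
by apply/ffun_onP/forallP.
Qed.

Lemma card_samples s : (#|samples E s|%:R : R) = (#|E|%:R) ^+ s.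
Proof.
transitivity (\sum_(t in samples E s) \prod_(i < s) (1:R)).
  by rewrite -sum1_card natr_sum; apply: eq_bigr => t _; rewrite prodr_const expr1n.
rewrite (sum_prod (fun _ _ => 1)) prodr_const card_ord; congr (_ ^+ _).
by rewrite sumr_const.
Qed.

Lemma sum_coord s (i : 'I_s) (f : U * L -> R) :
  \sum_(t in samples E s) f (t i) = (\sum_(e in E) f e) * (#|E|%:R) ^+ s.-1.
Proof.
pose g (j : 'I_s) (e : U * L) := if j == i then f e else 1.
transitivity (\sum_(t in samples E s) \prod_j g j (t j)).
  apply: eq_bigr => t _; rewrite (bigD1 i) //= big1 ?mulr1 /g ?eqxx //.
  by move=> j /negbTE ->.
rewrite sum_prod (bigD1 i) //= {1}/g eqxx; congr (_ * _).
rewrite (eq_bigr (fun _ => #|E|%:R)); last first.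
  by move=> j /negbTE ji; rewrite /g ji sumr_const.
by rewrite prodr_const cardC1 card_ord.
Qed.

Lemma expect_Y (PL : {set U * L}) s : (0 < s)%N -> (0 < #|E|)%N ->
  expect E (Yvar E PL s) = (\sum_(e in E) wtE E PL e) / #|E|%:R :> R.
Proof.
move=> s0 m0; rewrite /expect /Yvar -big_distrr /= exchange_big /=.
rewrite (eq_bigr (fun i => (\sum_(e in E) wtE E PL e) * (#|E|%:R) ^+ s.-1)); last first.
  by move=> i _; rewrite sum_coord.
rewrite sumr_const card_ord card_samples.
have mn0 : (#|E|%:R : R) != 0 by rewrite pnatr_eq0 -lt0n.
have sn0 : (s%:R : R) != 0 by rewrite pnatr_eq0 -lt0n.
rewrite -mulr_natr.
case: s s0 sn0 => // s' _ sn0 /=.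
rewrite exprS; field.
rewrite mul1r mn0 expf_neq0 //= andbT.
have := ler0n R s'; move=> h; apply/eqP => h2; lra.
Qed.

Lemma expN_le (y : R) : 0 <= y -> expR (- y) <= 1 - y + y ^+ 2.
Proof.
move=> y0; rewrite expRN.
have h1 : 1 + y <= expR y by apply: expR_ge1Dx.
have p1 : 0 < 1 + y by lra.
apply: (le_trans (y := (1 + y)^-1)).
  by rewrite lef_pV2 ?posrE ?expR_gt0.
rewrite -div1r ler_pdivrMr //.
have -> : (1 - y + y ^+ 2) * (1 + y) = 1 + y ^+ 3 by ring.
by rewrite lerDl exprn_ge0.
Qed.

Lemma chernoff (PL : {set U * L}) s (M lam a0 : R) :
  (0 < #|E|)%N -> 0 < lam ->
  (forall e, e \in E -> wtE E PL e <= M) ->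
  let W := \sum_(e in E) wtE E PL e in
  let m := (#|E|%:R : R) in
  #|[set t in samples E s | \sum_i wtE E PL (t i) < a0]|%:R / #|samples E s|%:R
  <= expR (lam * a0 + s%:R * ((- lam * W + lam ^+ 2 * M * W) / m)).
Proof.
move=> m0 lam0 XM; set W := \sum_(e in E) _; set m := (#|E|%:R : R) => /=.
have mpos : 0 < m by rewrite ltr0n.
set F := fun t : {ffun 'I_s -> U * L} => expR (lam * a0) * \prod_i expR (- lam * wtE E PL (t i)).
have step1 : #|[set t in samples E s | \sum_i wtE E PL (t i) < a0]|%:R
             <= \sum_(t in samples E s) F t.
  rewrite -sum1_card natr_sum.
  rewrite (eq_bigl (fun t => (t \in samples E s) && (\sum_i wtE E PL (t i) < a0))); last first.
    by move=> t; rewrite inE.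
  rewrite [X in _ <= X](bigID (fun t : {ffun 'I_s -> U * L} => \sum_i wtE E PL (t i) < a0) (fun t => t \in samples E s) F) /=.
  apply: ler_wpDr.
    by apply: sumr_ge0 => t _; rewrite /F mulr_ge0 ?expR_ge0 // prodr_ge0 // => i _; rewrite expR_ge0.
  apply: ler_sum => t /andP [_ lt].
  rewrite /F -expR_sum -expRD.
  rewrite (_ : \sum_i - lam * wtE E PL (t i) = - lam * \sum_i wtE E PL (t i)); last first.
    by rewrite mulr_sumr.
  have : 0 <= lam * a0 + - lam * \sum_i wtE E PL (t i).
    by rewrite mulNr -mulrBr mulr_ge0 ?ltW // subr_gt0.
  move: (lam * a0 + - lam * \sum_i wtE E PL (t i)) => x h.
  by apply: le_trans (expR_ge1Dx x); rewrite lerDl.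
have step2 : \sum_(t in samples E s) F t
   = expR (lam * a0) * (\sum_(e in E) expR (- lam * wtE E PL e)) ^+ s.
  rewrite /F -mulr_sumr (sum_prod (fun _ e => expR (- lam * wtE E PL e))).
  by rewrite prodr_const card_ord.
have step3 : \sum_(e in E) expR (- lam * wtE E PL e)
   <= m * expR ((- lam * W + lam ^+ 2 * M * W) / m).
  apply: (le_trans (y := \sum_(e in E) (1 - lam * wtE E PL e + lam ^+ 2 * M * wtE E PL e))).
    apply: ler_sum => e eE.
    have x0 := wtE_ge0 PL e; have xM := XM e eE.
    move: x0 xM; set x := wtE E PL e; move=> x0 xM.
    have lx0 : 0 <= lam * x by rewrite mulr_ge0 // ltW.
    have h1 := expN_le lx0.
    rewrite mulNr; apply: (le_trans h1).
    rewrite lerD2l exprMn -mulrA ler_wpM2l ?sqr_ge0 // expr2 ler_wpM2r //.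
  have -> : \sum_(e in E) (1 - lam * wtE E PL e + lam ^+ 2 * M * wtE E PL e)
           = m * (1 + (- lam * W + lam ^+ 2 * M * W) / m).
    rewrite big_split big_split /= sumr_const sumrN -!mulr_sumr -/W.
    rewrite mulrDr mulr1 mulrCA mulfV ?lt0r_neq0 // mulr1 mulNr addrA.
    by [].
  by apply: ler_wpM2l; [apply: ltW | apply: expR_ge1Dx].
rewrite card_samples -/m.
have mspos : 0 < m ^+ s by rewrite exprn_gt0.
rewrite ler_pdivrMr //.
apply: (le_trans step1); rewrite step2 expRD expRM_natl -(mulrA (expR (lam * a0))).
rewrite ler_wpM2l ?expR_ge0 // -exprMn mulrC.
apply: lerXn2r; rewrite ?nnegrE //.
  by apply: sumr_ge0 => e _; rewrite expR_ge0.
by rewrite mulr_ge0 ?expR_ge0 // ltW.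
Qed.

End Real.

Section Num.
Variable R : realType.

Lemma num_final (X N N1 N2 b w wb a be : R) :
  0 < a -> 0 < be -> 0 <= X -> 0 <= N1 -> 0 <= N2 -> 0 <= N -> 0 <= b ->
  4 * X <= N * (N - 1) -> (0 < X -> 4 <= N) -> N <= N1 + N2 ->
  N1 * (be ^+ 3 / (2 * a)) <= 4 * b -> N2 * (wb / (a * be)) <= 2 * w ->
  b <= 2 * be ^+ 4 -> be ^+ 4 <= 2 * b -> w <= 6 * wb -> 0 < wb ->
  X <= 17700%:R * a ^+ 4 * b.
Proof.
move=> a0 be0 X0 N10 N20 N0 b0 hX hN4 hN h1 h2 hb1 hb2 hw wb0.
have b3 : 0 < be ^+ 3 by rewrite exprn_gt0.
have hN1 : N1 <= 16 * (a * be).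
  have a2 : 0 < 2 * a by rewrite mulr_gt0.
  rewrite mulrA (ler_pdivrMr _ _ a2) in h1.
  rewrite -(ler_pM2r b3).
  have e : 16 * (a * be) * be ^+ 3 = 16 * a * be ^+ 4 by rewrite !exprS; ring.
  rewrite e; apply: (le_trans h1).
  have : 0 <= a * (2 * be ^+ 4 - b) by apply: mulr_ge0; [exact: ltW | rewrite subr_ge0].
  move: (be ^+ 4) => B4 h; nra.
have ab0 : 0 < a * be by rewrite mulr_gt0.
have hN2 : N2 <= 12 * (a * be).
  rewrite mulrA (ler_pdivrMr _ _ ab0) in h2.
  rewrite -(ler_pM2r wb0).
  have : 0 <= a * be * (6 * wb - w) by apply: mulr_ge0; [exact: ltW | rewrite subr_ge0].
  move: (a * be) h2 => ab h2 h; nra.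
have hN28 : N <= 28 * (a * be) by lra.
have hN4' : N ^+ 4 <= 28 ^+ 4 * (a ^+ 4 * be ^+ 4).
  rewrite -!exprMn; apply: lerXn2r => //; rewrite nnegrE //.
  by rewrite mulr_ge0 // ltW.
have a4 : 0 <= a ^+ 4 by rewrite exprn_ge0 // ltW.
have hN4'' : N ^+ 4 <= 28 ^+ 4 * 2 * (a ^+ 4 * b).
  apply: (le_trans hN4'); rewrite -mulrA; apply: ler_wpM2l.
    by rewrite exprn_ge0.
  by rewrite [X in _ <= X]mulrCA; apply: ler_wpM2l.
have [Xz|Xp] := eqVneq X 0.
  by rewrite Xz mulr_ge0 // mulr_ge0.
have Xpos : 0 < X by rewrite lt0r Xp X0.
have N4 := hN4 Xpos.
have hcub : 64 * (N - 1) <= 3 * N ^+ 3.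
  have e : 3 * N ^+ 3 - 64 * (N - 1) = (N - 4) * (3 * N ^+ 2 + 12 * N - 16) by ring.
  rewrite -subr_ge0 e mulr_ge0 // ?subr_ge0 //.
  have : 16 <= N ^+ 2 by rewrite expr2; nra.
  lra.
have hX2 : 256 * X <= 3 * N ^+ 4.
  have : N * (64 * (N - 1)) <= N * (3 * N ^+ 3) by rewrite ler_wpM2l.
  have e : N * (3 * N ^+ 3) = 3 * N ^+ 4 by rewrite !exprS; ring.
  rewrite e; lra.
have Z0 : 0 <= a ^+ 4 * b by rewrite mulr_ge0.
rewrite -mulrA; move: (a ^+ 4 * b) (N ^+ 4) hN4'' hX2 Z0 => Z N4' h h' Z0.
clear -h h' Z0. lra.
Qed.

Lemma num_chern (s C l b m a be W eps M lam c : R) :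
  0 < c -> 32 <= c * c ->
  0 < a -> 0 < be -> 0 < b -> 0 < m -> 0 < l -> 0 <= s -> eps = a ^+ 4 ->
  1 / (2 * (1 - c * eps)) < C -> c * eps < 1 / 2 ->
  b * (1 - c * eps) <= W -> W <= b -> be ^+ 4 <= 2 * b ->
  C * m * l / (be * a ^+ 9) <= s ->
  M = 2 * be ^+ 3 / a -> lam = c * eps / (2 * M) ->
  lam * (s * (b * (1 - 2 * c * eps)) / m)
    + s * ((- lam * W + lam ^+ 2 * M * W) / m) < - l.
Proof.
move=> c0 cc a0 be0 b0 m0 l0 s0 ea hC he hW1 hW2 hb hs eM elam.
have eps0 : 0 < eps by rewrite ea exprn_gt0.
have e0 : 0 < c * eps by rewrite mulr_gt0.
have M0 : 0 < M by rewrite eM divr_gt0 // mulr_gt0 // exprn_gt0.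
have lam0 : 0 < lam by rewrite elam divr_gt0 ?mulr_gt0.
have lamM : lam * M = c * eps / 2.
  by rewrite elam; field; rewrite lt0r_neq0.
have eqexp : lam * (s * (b * (1 - 2 * c * eps)) / m)
    + s * ((- lam * W + lam ^+ 2 * M * W) / m)
    = (s * lam / m) * (b * (1 - 2 * c * eps) - W + (lam * M) * W).
  by field; rewrite lt0r_neq0.
rewrite eqexp lamM.
have inner : b * (1 - 2 * c * eps) - W + c * eps / 2 * W <= - (b * (c * eps) / 2).
  have h1 : 0 <= (W - b * (1 - c * eps)) * (1 - c * eps / 2).
    by apply: mulr_ge0; rewrite subr_ge0 //; lra.
  have h2 : 0 <= b * ((c * eps) * (c * eps)).
    by apply: mulr_ge0; [exact: ltW | apply: mulr_ge0; exact: ltW].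
  lra.
have slm : 0 <= s * lam / m by rewrite divr_ge0 ?mulr_ge0 // ltW.
apply: le_lt_trans (ler_wpM2l slm inner) _.
rewrite mulrN ltrN2.
have X0 : 0 <= lam / m * (b * (c * eps) / 2).
  by rewrite mulr_ge0 ?divr_ge0 ?mulr_ge0 // ltW.
have G1 : C * m * l / (be * a ^+ 9) * (lam / m * (b * (c * eps) / 2))
          <= s * (lam / m * (b * (c * eps) / 2)).
  exact: ler_wpM2r.
have G2 : C * m * l / (be * a ^+ 9) * (lam / m * (b * (c * eps) / 2))
          = C * l * (c * c) * b / (8 * be ^+ 4).
  rewrite elam eM ea; field.
  by rewrite !lt0r_neq0 ?exprn_gt0.
have C2 : 1 / 2 <= 1 / (2 * (1 - c * eps)).
  have p : 0 < 2 * (1 - c * eps) by lra.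
  rewrite ler_pdivlMr //; lra.
have C0 : 0 < C by lra.
have K0 : 0 < C * l * (c * c) by rewrite !mulr_gt0.
have G3 : C * l * (c * c) / 16 <= C * l * (c * c) * b / (8 * be ^+ 4).
  have p : 0 < 8 * be ^+ 4 by rewrite mulr_gt0 ?exprn_gt0.
  rewrite ler_pdivlMr //.
  have h : 0 <= C * l * (c * c) * (2 * b - be ^+ 4) by rewrite mulr_ge0 ?subr_ge0 // ltW.
  move: (C * l * (c * c)) (be ^+ 4) h K0 => K B4 h K0; lra.
have G4 : l < C * l * (c * c) / 16.
  have h1 : 0 < (C - 1 / 2) * (l * (c * c)) by rewrite mulr_gt0 ?subr_gt0 ?mulr_gt0 //; lra.
  have h2 : 0 <= l * (c * c - 32) by rewrite mulr_ge0 ?subr_ge0 // ltW.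
  lra.
have eY : s * lam / m * (b * (c * eps) / 2) = s * (lam / m * (b * (c * eps) / 2)).
  by rewrite !mulrA.
rewrite eY; lra.
Qed.

End Num.

Section S. Variable R : realType.
Lemma cH_sq : 32 <= c_H * c_H :> R. Proof. rewrite /c_H. lra. Qed.
Lemma cH_pos : 0 < c_H :> R. Proof. by rewrite /c_H ltr0n. Qed.
Lemma pow4 (x : R) : 0 <= x -> (x `^ (1/4)) ^+ 4 = x.
Proof. move=> x0; rewrite -powR_mulrn ?powR_ge0 // -powRrM. 
rewrite (_ : 1 / 4 * 4%:R = 1); first by rewrite powRr1.
by rewrite div1r mulVf // pnatr_eq0. Qed.
Lemma pow34 (x : R) : 0 <= x -> x `^ (3/4) = (x `^ (1/4)) ^+ 3.
Proof. move=> x0; rewrite -powR_mulrn ?powR_ge0 // -powRrM. 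
by congr (_ `^ _); rewrite mulrC mul1r. Qed.
Lemma pow94 (x : R) : 0 <= x -> x `^ (9/4) = (x `^ (1/4)) ^+ 9.
Proof. move=> x0; rewrite -powR_mulrn ?powR_ge0 // -powRrM. 
by congr (_ `^ _); rewrite mulrC mul1r. Qed.
End S.


Set Implicit Arguments. Unset Strict Implicit. Unset Printing Implicit Defensive.

Lemma sum_sub (T : finType) (A B : {set T}) (f : T -> nat) :
  A \subset B -> (\sum_(x in A) f x <= \sum_(x in B) f x)%N.
Proof. by move=> AB; rewrite [X in (_ <= X)%N](big_setID A) /= (setIidPr AB) leq_addr. Qed.

Lemma card_thr (R : realType) (T : finType) (A : {set T}) (f : T -> nat) (t : R) :
  (forall x, x \in A -> t <= (f x)%:R) -> #|A|%:R * t <= (\sum_(x in A) f x)%:R.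
Proof.
move=> h; rewrite mulr_natl -sumr_const natr_sum; exact: ler_sum.
Qed.

Lemma natr_predn (R : realType) n : ((n * n.-1)%N%:R : R) = n%:R * (n%:R - 1).
Proof. by case: n => [|n] /=; rewrite ?mul0n ?mul0r // natrM -natr1 addrK. Qed.

Lemma eps2_lt1 (R : realType) (eps : R) : 0 < eps < 1 -> eps ^+ 2 < 1.
Proof. move=> /andP [e0 e1]; rewrite expr2; nra. Qed.

Unset Implicit Arguments.
Theorem lemma11 (R : realType) (U L : finType) (E : {set U * L})
    (eps bb wb c : R) (PH PL : {set U * L}) (s : nat) :
  (0 < #|E|)%N ->
  0 < eps < 1 ->
  (nbutterflies E)%:R / 2 <= bb <= 2 * (nbutterflies E)%:R ->
  (wedges E)%:R / 6 <= wb <= 6 * (wedges E)%:R ->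
  appropriate E bb wb eps PH PL ->
  PL != set0 ->
  0 < c ->
  c * (nedges E)%:R * ln ((nverts U L)%:R / eps ^+ 2)
    / (bb `^ (1 / 4) * eps `^ (9 / 4)) <= s%:R ->
  let b := (nbutterflies E)%:R : R in
  let m := (nedges E)%:R : R in
  (b * (1 - c_H * eps) <= m * expect E (Yvar E PL s)
   /\ m * expect E (Yvar E PL s) <= b)
  /\ (c > 1 / (2 * (1 - c_H * eps)) ->
      prob E (fun t : {ffun 'I_s -> U * L} => m * Yvar E PL s t < b * (1 - 2 * c_H * eps))
        < eps ^+ 2 / (nverts U L)%:R).
Proof.
move=> m0 epsI /andP [bbl bbu] /andP [wbl wbu] [HU HI Hh Hl] PLn0 c0 Hs b m.
have /andP [eps0 eps1] := epsI.
have PLE : PL \subset E by rewrite -HU subsetUr.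
have mpos : 0 < m by rewrite /m ltr0n.
have n0 : (0 < nverts U L)%N.
  move/card_gt0P: m0 => [e _]; rewrite /nverts addn_gt0; apply/orP; left.
  by apply/card_gt0P; exists e.1.
have npos : (0 < (nverts U L)%:R :> R) by rewrite ltr0n.
have lpos : 0 < ln ((nverts U L)%:R / eps ^+ 2).
  apply: ln_gt0; rewrite ltr_pdivlMr ?exprn_gt0 // mul1r.
  have := eps2_lt1 epsI; have : (1 : R) <= (nverts U L)%:R by rewrite ler1n.
  lra.
set bn := nbutterflies E.
set KS := [set B in butterflies E | bedges B :&: PL != set0].
set XS := [set B in butterflies E | bedges B :&: PL == set0].
have hKX : bn = (#|KS| + #|XS|)%N.
  rewrite /bn /nbutterflies /KS /XS !card_setsum -sum1_card -big_split /=.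
  by apply: eq_bigr => B _; case: (bedges B :&: PL == set0).
have W_eq : \sum_(e in E) wtE E PL e = #|KS|%:R :> R := sum_wtE R PLE.
have bge0 : 0 <= b by rewrite /b ler0n.
have XSsub : XS \subset [set B in butterflies E | bedges B \subset [set e in E | ~~ light E bb wb eps e]].
  apply/subsetP => B; rewrite !inE => /andP [Bb0 /eqP e0].
  have Bb : B \in butterflies E by rewrite inE.
  rewrite Bb0 /=.
  apply/subsetP => e eB; rewrite inE (subsetP (bedges_sub Bb) _ eB) /=.
  apply/negP => /(Hl e (subsetP (bedges_sub Bb) _ eB)) eP.
  have : e \in bedges B :&: PL by rewrite inE eB eP.
  by rewrite e0 inE.
have Xle : (#|XS|%:R : R) <= c_H * eps * b.
  have [bz|bpos] := posnP bn.
    have -> : #|XS| = 0%N.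
      by move: hKX; rewrite bz => /esym/eqP; rewrite addn_eq0 => /andP [_ /eqP ->].
    by rewrite /b -/bn bz !mulr0.
  rewrite -/b in bbl bbu.
  have bpos' : 0 < b by rewrite /b ltr0n.
  have bb0 : 0 < bb by lra.
  have wpos := wedges_pos bpos.
  have wb0 : 0 < wb.
    have : (0 : R) < (wedges E)%:R by rewrite ltr0n.
    lra.
  have ea4 : (eps `^ (1/4)) ^+ 4 = eps := pow4 (ltW eps0).
  have eb4 : (bb `^ (1/4)) ^+ 4 = bb := pow4 (ltW bb0).
  have eb3 : bb `^ (3/4) = (bb `^ (1/4)) ^+ 3 := pow34 (ltW bb0).
  have eab : (eps * bb) `^ (1/4) = eps `^ (1/4) * bb `^ (1/4) := powRM _ (ltW eps0) (ltW bb0).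
  have a0 : 0 < eps `^ (1/4) by rewrite powR_gt0.
  have be0 : 0 < bb `^ (1/4) by rewrite powR_gt0.
  move: ea4 eb4 eb3 eab a0 be0 Hh Hl XSsub.
  set a := eps `^ (1/4); set be := bb `^ (1/4).
  move=> ea4 eb4 eb3 eab a0 be0 Hh Hl XSsub.
  set NL := [set e in E | ~~ light E bb wb eps e].
  set NL1 := [set e in E | be ^+ 3 / (2 * a) <= (bfly_edge E e)%:R].
  set NL2 := [set e in E | wb / (a * be) <= (edeg E e)%:R].
  have NLsub : NL \subset NL1 :|: NL2.
    apply/subsetP => e; rewrite !inE => /andP [eE nl]; rewrite eE /=.
    by move: nl; rewrite /light negb_and -!leNgt -/a eb3 eab.
  have hN : (#|NL| <= #|NL1| + #|NL2|)%N.
    by apply: leq_trans (subset_leq_card NLsub) _; rewrite cardsU leq_subr.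
  have h1 : #|NL1|%:R * (be ^+ 3 / (2 * a)) <= 4 * b.
    apply: le_trans (card_thr (f := bfly_edge E) _) _ => [e|].
      by rewrite inE => /andP [].
    rewrite /b -natrM ler_nat; apply: leq_trans (sum_bfly E).
    by apply: sum_sub; apply/subsetP => e; rewrite inE => /andP [].
  have h2 : #|NL2|%:R * (wb / (a * be)) <= 2 * (wedges E)%:R.
    apply: le_trans (card_thr (f := edeg E) _) _ => [e|].
      by rewrite inE => /andP [].
    rewrite -natrM ler_nat -sum_edeg.
    by apply: sum_sub; apply/subsetP => e; rewrite inE => /andP [].
  have hX : 4 * #|XS|%:R <= #|NL|%:R * (#|NL|%:R - 1) :> R.
    rewrite -natr_predn -natrM ler_nat; apply: leq_trans (bfly_count E NL).
    by rewrite leq_mul2l subset_leq_card.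
  have hX4 : 0 < #|XS|%:R :> R -> 4 <= #|NL|%:R :> R.
    rewrite ltr0n => /card_gt0P [B BX]; move: (subsetP XSsub B BX).
    rewrite inE => /andP [Bb BN]; rewrite ler_nat.
    exact: bfly_NL4 Bb BN.
  have := num_final (X := #|XS|%:R) (N := #|NL|%:R) (N1 := #|NL1|%:R) (N2 := #|NL2|%:R)
     (b := b) (w := (wedges E)%:R) (wb := wb) a0 be0 (ler0n _ _) (ler0n _ _) (ler0n _ _) (ler0n _ _) bge0 hX hX4.
  rewrite -natrD ler_nat => /(_ hN h1 h2).
  rewrite eb4 /c_H ea4; apply; lra.
rewrite -/m in Hs.
have spos : (0 < bn)%N -> (0 < s)%N.
  move=> bp; rewrite lt0n; apply/eqP => s0; move: Hs; rewrite s0 => Hs.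
  have bpos' : 0 < b by rewrite /b ltr0n.
  rewrite -/b in bbl; have bb0 : 0 < bb by lra.
  have : 0 < c * m * ln ((nverts U L)%:R / eps ^+ 2) / (bb `^ (1 / 4) * eps `^ (9 / 4)).
    by rewrite divr_gt0 ?mulr_gt0 ?powR_gt0.
  lra.
have KX : (#|KS|%:R : R) = b - #|XS|%:R by rewrite /b -/bn hKX natrD addrK.
have mE : m * expect E (Yvar E PL s) = #|KS|%:R.
  have [s0|sp] := posnP s.
    have bz : bn = 0%N by apply/eqP; rewrite -leqn0 leqNgt; apply/negP => /spos; rewrite s0.
    have -> : #|KS| = 0%N.
      by move: hKX; rewrite bz => /esym/eqP; rewrite addn_eq0 => /andP [/eqP -> _].
    subst s; rewrite /expect big1 ?mulr0 // => t _.
    by rewrite /Yvar big_ord0 mulr0.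
  rewrite (expect_Y R PL sp m0) W_eq /m /nedges mulrC divfK //.
  by rewrite pnatr_eq0 -lt0n.
have X0 : (0 : R) <= #|XS|%:R by apply: ler0n.
rewrite mE; split; first by split; lra.
move=> hc.
have Yge0 : forall t : {ffun 'I_s -> U * L}, 0 <= Yvar E PL s t :> R.
  move=> t; apply: mulr_ge0; first by rewrite invr_ge0 ler0n.
  by apply: sumr_ge0 => i _; apply: wtE_ge0.
have rhs0 : 0 < eps ^+ 2 / (nverts U L)%:R by rewrite divr_gt0 ?exprn_gt0.
have [Bt0|Btpos] := lerP (b * (1 - 2 * c_H * eps)) 0.
  rewrite /prob /=.
  have -> : [set t in samples E s | m * Yvar E PL s t < b * (1 - 2 * c_H * eps)] = set0.
    apply/setP => t; rewrite !inE; apply/negP => /andP [_ h].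
    have := Yge0 t; have : 0 <= m * Yvar E PL s t by rewrite mulr_ge0 // ltW.
    lra.
  by rewrite cards0 mul0r.
have bpos : (0 < bn)%N.
  rewrite lt0n; apply/eqP => bz; move: Btpos; rewrite /b -/bn bz mul0r.
  by rewrite ltxx.
have bpos' : 0 < b by rewrite /b ltr0n.
have ce : c_H * eps < 1 / 2.
  move: Btpos; rewrite pmulr_rgt0 // => h; lra.
have sp := spos bpos.
have spos' : (0 : R) < s%:R by rewrite ltr0n.
rewrite -/b in bbl bbu.
have bb0 : 0 < bb by lra.
have ea4 : (eps `^ (1/4)) ^+ 4 = eps := pow4 (ltW eps0).
have eb4 : (bb `^ (1/4)) ^+ 4 = bb := pow4 (ltW bb0).
have eb3 : bb `^ (3/4) = (bb `^ (1/4)) ^+ 3 := pow34 (ltW bb0).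
have ea9 : eps `^ (9/4) = (eps `^ (1/4)) ^+ 9 := pow94 (ltW eps0).
have a0 : 0 < eps `^ (1/4) by rewrite powR_gt0.
have be0 : 0 < bb `^ (1/4) by rewrite powR_gt0.
rewrite ea9 in Hs.
move: ea4 eb4 eb3 a0 be0 Hh Hs.
set a := eps `^ (1/4); set be := bb `^ (1/4).
move=> ea4 eb4 eb3 a0 be0 Hh Hs.
set M := 2 * be ^+ 3 / a.
have M0 : 0 < M by rewrite divr_gt0 // mulr_gt0 // exprn_gt0.
set lam := c_H * eps / (2 * M).
have cH0 : 0 < c_H :> R := cH_pos R.
have lam0 : 0 < lam.
  rewrite /lam; apply: divr_gt0; first exact: mulr_gt0.
  by apply: mulr_gt0 => //; apply: ltr0Sn.
have XM : forall e, e \in E -> wtE E PL e <= M.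
  move=> e eE; case: (boolP (e \in PL)) => eP; last first.
    by rewrite /wtE (negbTE eP) ltW.
  have nh : ~~ heavy E bb wb eps e.
    apply/negP => /(Hh e eE) eH.
    have : e \in PH :&: PL by rewrite inE eH eP.
    by rewrite HI inE.
  move: nh; rewrite /heavy negb_or => /andP [nh1 _]; rewrite -leNgt -/a eb3 in nh1.
  exact: le_trans (wtE_le_bfly R E PL e) nh1.
set Bt := b * (1 - 2 * c_H * eps).
have evt : [set t in samples E s | m * Yvar E PL s t < Bt] =
           [set t in samples E s | \sum_i wtE E PL (t i) < s%:R * Bt / m].
  apply/setP => t; rewrite !inE; congr (_ && _).
  rewrite /Yvar ltr_pdivlMr // mulrCA mulrC ltr_pdivrMr //.
  by rewrite (mulrC Bt) (mulrC _ m).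
rewrite /prob /= evt.
have ch := chernoff s (s%:R * Bt / m) m0 lam0 XM.
simpl in ch.
apply: le_lt_trans ch _.
rewrite W_eq (_ : (#|E|%:R : R) = m) //.
have el : eps ^+ 2 / (nverts U L)%:R = expR (- ln ((nverts U L)%:R / eps ^+ 2)).
  by rewrite expRN lnK ?invf_div // posrE divr_gt0 ?exprn_gt0.
rewrite el ltr_expR.
have hW1 : b * (1 - c_H * eps) <= #|KS|%:R by lra.
have hW2 : #|KS|%:R <= b by lra.
have hb : be ^+ 4 <= 2 * b by rewrite eb4.
apply: (num_chern (c := c_H) (C := c) (eps := eps) (a := a) (be := be) (M := M) (lam := lam)
          cH0 (cH_sq R) a0 be0 bpos' mpos lpos (ltW spos') (esym ea4) hc ce hW1 hW2 hb Hs).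
  by [].
by [].
Qed.
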